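(* Let $T$ be a tree with at least two vertices. The following are equivalent. (1) $T$ is always solvable. (2) Either there are disjoint always solvable trees $T_1,T_2$ and vertices $u\in V(T_1)$, $w\in V(T_2)$ with $\mathcal{A}_{T_1}(u)=0$, $\mathcal{A}_{T_2}(w)=1$ such that $T=T_1uwT_2$; or there are pairwise disjoint always solvable trees $T_1,T_2,T_3$ and vertices $x\in V(T_1)$, $y\in V(T_2)$, $z\in V(T_3)$ with $\mathcal{A}_{T_1}(x)=\mathcal{A}_{T_2}(y)=\mathcal{A}_{T_3}(z)=1$ such that $T$ is obtained from the disjoint union $T_1\cup T_2\cup T_3$ by adding the edges $xy$ and $yz$. (3) Either there are disjoint always solvable trees $T_1,T_2$ and vertices $u\in V(T_1)$, $w\in V(T_2)$ with $\mathcal{A}_{T_1}(u)=0$, $\mathcal{A}_{T_2}(w)=1$ such that $T=T_1uwT_2$; or there are pairwise disjoint always solvable trees $T_1,T_2,T_3$ and vertices $a\in V(T_1)$, $b\in V(T_2)$ with $\mathcal{A}_{T_1}(a)=\mathcal{A}_{T_2}(b)=1$, such that, setting $X:=T_1abT_2$, there are vertices $y\in V(T_3)$ and $x\in V(X)$ with $\mathcal{A}_{T_3}(y)=1$, $\mathcal{A}_X(x)=-1$ and $T=T_3yxX$.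
   Context: For a finite simple graph $G$ with vertex set $\{v_1,\dots,v_n\}$, the closed adjacency matrix $N(G)$ is the $n\times n$ matrix over $\mathbb{Z}_2$ whose $(i,j)$ entry is $1$ iff $i=j$ or $v_i$ is adjacent to $v_j$. Vectors in $\mathbb{Z}_2^{V(G)}$ are called patterns/configurations; a pattern $\mathbf{p}$ solves a configuration $\mathbf{c}$ if $N(G)\mathbf{p}=\mathbf{c}$. The nullity is $\nu(G):=\dim\operatorname{Ker}(N(G))$; elements of $\operatorname{Ker}(N(G))$ are null patterns; $G$ is always solvable if $\nu(G)=0$. $\mathbf{1}$ is the all-ones configuration; it is solvable on every graph. A vertex $v$ is half-activated if $\boldsymbol{\ell}(v)=1$ for some null pattern $\boldsymbol{\ell}$; otherwise it is always-activated if $\mathbf{p}(v)=1$ for every $\mathbf{p}$ with $N(G)\mathbf{p}=\mathbf{1}$, and never-activated if $\mathbf{p}(v)=0$ for every such $\mathbf{p}$. The activation number $\mathcal{A}_G(v)$ is $1$, $0$, $-1$ if $v$ is always-activated, never-activated, half-activated respectively. For disjoint graphs $G_1,G_2$ and $u\in V(G_1)$, $w\in V(G_2)$, $G_1uwG_2$ denotes the graph obtained from the disjoint union $G_1\cup G_2$ by adding the edge $uw$. *)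

(* Defs.v *)
From HB Require Import structures.
From mathcomp Require Import all_boot all_order all_algebra.
Set Implicit Arguments. Unset Strict Implicit. Unset Printing Implicit Defensive.
Import GRing.Theory.
Local Open Scope ring_scope.

Section Graphs.
Variable V : finType.
Variable e : rel V.

Definition simple_graph : Prop := symmetric e /\ irreflexive e.

Definition connected_graph : Prop := forall x y : V, connect e x y.

Definition acyclic_graph : Prop :=
  forall c : seq V, (3 <= size c)%N -> uniq c -> ~~ cycle e c.

Definition is_tree : Prop := (0 < #|V|)%N /\ connected_graph /\ acyclic_graph.

Definition closed_adj : 'M['F_2]_#|V| :=
  \matrix_(i, j) (if (i == j) || e (enum_val i) (enum_val j) then 1 else 0).

(* nullity = dim Ker N(G) (column kernel {p | N p = 0}) *)
Definition nullity : nat := \rank (kermx closed_adj^T).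

Definition always_solvable : Prop := nullity = 0%N.

Definition pat_at (p : 'cV['F_2]_#|V|) (v : V) : 'F_2 := p (enum_rank v) ord0.

Definition half_activated (v : V) : bool :=
  [exists p : 'cV['F_2]_#|V|, (closed_adj *m p == 0) && (pat_at p v == 1)].

Definition always_activated (v : V) : bool :=
  ~~ half_activated v &&
  [forall p : 'cV['F_2]_#|V|, (closed_adj *m p == const_mx 1) ==> (pat_at p v == 1)].

Definition never_activated (v : V) : bool :=
  ~~ half_activated v &&
  [forall p : 'cV['F_2]_#|V|, (closed_adj *m p == const_mx 1) ==> (pat_at p v == 0)].

Definition activation (v : V) : int :=
  if half_activated v then (-1)%R
  else if always_activated v then 1%R
  else if never_activated v then 0%R else 0%R.

End Graphs.

Definition induced (V : finType) (e : rel V) (S : {set V}) : rel {x : V | x \in S} :=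
  fun x y => e (val x) (val y).
Arguments induced [V] e S _ _.

Definition ind_tree (V : finType) (e : rel V) (S : {set V}) : Prop :=
  is_tree (induced e S).

Definition ind_always_solvable (V : finType) (e : rel V) (S : {set V}) : Prop :=
  always_solvable (induced e S).

(* activation number of v in G[S] (v is assumed to lie in S; 0 otherwise) *)
Definition ind_activation (V : finType) (e : rel V) (S : {set V}) (v : V) : int :=
  match (insub v : option {x : V | x \in S}) with
  | Some x => activation (induced e S) x
  | None => 0%R
  end.

Definition only_edge (V : finType) (e : rel V) (A B : {set V}) (a b : V) : Prop :=
  forall x y, x \in A -> y \in B -> e x y = (x == a) && (y == b).

Definition no_edge (V : finType) (e : rel V) (A B : {set V}) : Prop :=
  forall x y, x \in A -> y \in B -> e x y = false.

(* T = T1 u w T2 with T1 = T[V1], T2 = T[V2] always solvable trees,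
   A_{T1}(u) = 0, A_{T2}(w) = 1 *)
Definition split_two (V : finType) (e : rel V) : Prop :=
  exists (V1 V2 : {set V}) (u w : V),
    [/\ V1 :&: V2 = set0, V1 :|: V2 = setT, u \in V1, w \in V2 &
    [/\ ind_tree e V1, ind_tree e V2, ind_always_solvable e V1,
        ind_always_solvable e V2 &
    [/\ ind_activation e V1 u = 0%R, ind_activation e V2 w = 1%R &
        only_edge e V1 V2 u w]]].

Definition three_partition (V : finType) (V1 V2 V3 : {set V}) : Prop :=
  [/\ V1 :&: V2 = set0, V1 :&: V3 = set0, V2 :&: V3 = set0 &
      V1 :|: V2 :|: V3 = setT].

Definition three_trees (V : finType) (e : rel V) (V1 V2 V3 : {set V}) : Prop :=
  [/\ ind_tree e V1, ind_tree e V2, ind_tree e V3 &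
  [/\ ind_always_solvable e V1, ind_always_solvable e V2 &
      ind_always_solvable e V3]].

(* T obtained from T1 ∪ T2 ∪ T3 by adding xy and yz, A(x)=A(y)=A(z)=1 *)
Definition split_path3 (V : finType) (e : rel V) : Prop :=
  exists (V1 V2 V3 : {set V}) (x y z : V),
    [/\ three_partition V1 V2 V3, three_trees e V1 V2 V3,
        [/\ x \in V1, y \in V2 & z \in V3],
        [/\ ind_activation e V1 x = 1%R, ind_activation e V2 y = 1%R &
            ind_activation e V3 z = 1%R] &
        [/\ only_edge e V1 V2 x y, only_edge e V2 V3 y z & no_edge e V1 V3]].

(* X = T1 a b T2, T = T3 y x X with A_{T1}(a)=A_{T2}(b)=A_{T3}(y)=1, A_X(x)=-1 *)
Definition split_X (V : finType) (e : rel V) : Prop :=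
  exists (V1 V2 V3 : {set V}) (a b y x : V),
    [/\ three_partition V1 V2 V3, three_trees e V1 V2 V3,
        [/\ a \in V1, b \in V2, y \in V3 & x \in V1 :|: V2],
        [/\ ind_activation e V1 a = 1%R, ind_activation e V2 b = 1%R,
            ind_activation e V3 y = 1%R &
            ind_activation e (V1 :|: V2) x = (-1)%R] &
        [/\ only_edge e V1 V2 a b & only_edge e V3 (V1 :|: V2) y x]].

(* Main.v *)
Require Import Defs.
From mathcomp Require Import all_boot all_order all_algebra.
From mathcomp Require Import zify.
From Stdlib Require Import Classical.
Set Implicit Arguments. Unset Strict Implicit. Unset Printing Implicit Defensive.
Import GRing.Theory.
Local Open Scope ring_scope.
Lemma F2_cases (x : 'F_2) : x = 0 \/ x = 1.
Proof.
case: x => [[|[|n]] H]; [left|right|]; try by apply/val_inj.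
by [].
Qed.

Lemma F2_dbl (x : 'F_2) : x + x = 0.
Proof. by case: (F2_cases x) => ->; apply/val_inj. Qed.

Lemma F2_sq (x : 'F_2) : x * x = x.
Proof. by case: (F2_cases x) => ->; apply/val_inj. Qed.

Lemma F2_ne0 (x : 'F_2) : x <> 0 -> x = 1.
Proof. by case: (F2_cases x). Qed.

Lemma F2_ne1 (x : 'F_2) : x <> 1 -> x = 0.
Proof. by case: (F2_cases x). Qed.

Lemma F2_add0 (x y : 'F_2) : x + y = 0 -> x = y.
Proof. by case: (F2_cases x) => ->; case: (F2_cases y) => -> //; move/val_eqP. Qed.

Lemma F2_10 : (1 : 'F_2) <> 0.
Proof. by move/val_eqP. Qed.
Definition NB (W : finType) (r : rel W) (f : W -> 'F_2) (v : W) : 'F_2 :=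
  \sum_w (if (v == w) || r v w then f w else 0).

Definition colW (W : finType) (f : W -> 'F_2) : 'cV['F_2]_#|W| :=
  \col_i f (enum_val i).

Lemma pat_colW (W : finType) (f : W -> 'F_2) v : pat_at (colW f) v = f v.
Proof. by rewrite /pat_at /colW mxE enum_rankK. Qed.

Lemma colW_pat (W : finType) (p : 'cV['F_2]_#|W|) : colW (pat_at p) = p.
Proof. by apply/matrixP=> i j; rewrite /colW /pat_at mxE enum_valK (ord1 j). Qed.

Lemma NB_ext (W : finType) (r : rel W) f g v :
  (forall w, f w = g w) -> NB r f v = NB r g v.
Proof. by move=> H; apply: eq_bigr => w _; rewrite H. Qed.

Lemma mulNE (W : finType) (r : rel W) (p : 'cV['F_2]_#|W|) i :
  (closed_adj r *m p) i ord0 = NB r (pat_at p) (enum_val i).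
Proof.
rewrite mxE /NB (reindex (@enum_val W (mem W))) /=; last first.
  by exists enum_rank => x _; [rewrite enum_valK | rewrite enum_rankK].
apply: eq_bigr => j _; rewrite /closed_adj mxE /pat_at enum_valK.
rewrite (inj_eq enum_val_inj).
by case: ifP => _; rewrite ?mul1r ?mul0r.
Qed.

Lemma mul_eq0 (W : finType) (r : rel W) (p : 'cV['F_2]_#|W|) :
  (closed_adj r *m p = 0) <-> (forall w, NB r (pat_at p) w = 0).
Proof.
split.
  move=> /matrixP H w; move: H => /(_ (enum_rank w) ord0).
  by rewrite mulNE enum_rankK mxE.
move=> H; apply/matrixP => i j; rewrite (ord1 j) mulNE H mxE //.
Qed.

Lemma mul_eq1 (W : finType) (r : rel W) (p : 'cV['F_2]_#|W|) :
  (closed_adj r *m p = const_mx 1) <-> (forall w, NB r (pat_at p) w = 1).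
Proof.
split.
  move=> /matrixP H w; move: H => /(_ (enum_rank w) ord0).
  by rewrite mulNE enum_rankK mxE.
move=> H; apply/matrixP => i j; rewrite (ord1 j) mulNE H mxE //.
Qed.

Lemma solvE (W : finType) (r : rel W) :
  always_solvable r <-> (forall f, (forall w, NB r f w = 0) -> forall w, f w = 0).
Proof.
rewrite /always_solvable /nullity; split.
  move=> H f Hf w.
  have K : kermx (closed_adj r)^T == 0 by rewrite -mxrank_eq0 H.
  have Hp : closed_adj r *m colW f = 0.
    by apply/mul_eq0 => v; rewrite (NB_ext _ _ (pat_colW f)).
  have : ((colW f)^T <= kermx (closed_adj r)^T)%MS.
    by rewrite sub_kermx -trmx_mul Hp trmx0.
  rewrite (eqP K) submx0 => /eqP H0.
  move/matrixP: H0 => /(_ ord0 (enum_rank w)).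
  by rewrite !mxE enum_rankK.
move=> H; apply/eqP; rewrite mxrank_eq0; apply/rowV0P => u.
rewrite sub_kermx => /eqP Hu.
have Hu' : closed_adj r *m u^T = 0.
  by rewrite -[_ *m _]trmxK trmx_mul trmxK Hu trmx0.
move/mul_eq0: Hu' => /H Hf.
apply/matrixP => i j; rewrite (ord1 i) mxE.
by have := Hf (enum_val j); rewrite /pat_at enum_valK mxE.
Qed.

Lemma surjE (W : finType) (r : rel W) : always_solvable r ->
  forall c : W -> 'F_2, exists f, forall w, NB r f w = c w.
Proof.
rewrite /always_solvable /nullity mxrank_ker => H c.
have Hr : row_full (closed_adj r)^T.
  rewrite /row_full eqn_leq rank_leq_col /=.
  by rewrite -subn_eq0 H.
rewrite row_full_unit unitmx_tr in Hr.
exists (pat_at (invmx (closed_adj r) *m colW c)) => w.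
have := mulNE r (invmx (closed_adj r) *m colW c) (enum_rank w).
by rewrite mulmxA mulmxV // mul1mx /colW mxE !enum_rankK => <-.
Qed.

Lemma actE (W : finType) (r : rel W) v :
  activation r v = if half_activated r v then (-1)%R else
    if [forall p : 'cV['F_2]_#|W|, (closed_adj r *m p == const_mx 1) ==> (pat_at p v == 1)]
    then 1%R else 0%R.
Proof.
rewrite /activation /always_activated /never_activated.
by case: (half_activated r v) => //=; case: [forall _, _] => //; case: [forall _, _].
Qed.

Lemma halfE (W : finType) (r : rel W) v :
  half_activated r v <-> exists f, (forall w, NB r f w = 0) /\ f v = 1.
Proof.
split.
  case/existsP => p /andP[/eqP Hp /eqP Hv]; exists (pat_at p); split => //.
  exact/mul_eq0.
case=> f [Hf Hv]; apply/existsP; exists (colW f); apply/andP; split.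
  by apply/eqP/mul_eq0 => w; rewrite (NB_ext _ _ (pat_colW f)).
by rewrite pat_colW Hv.
Qed.

Lemma allE (W : finType) (r : rel W) v :
  [forall p : 'cV['F_2]_#|W|, (closed_adj r *m p == const_mx 1) ==> (pat_at p v == 1)]
  <-> (forall f, (forall w, NB r f w = 1) -> f v = 1).
Proof.
split.
  move/forallP => H f Hf; have /implyP := H (colW f); rewrite pat_colW => H2.
  apply/eqP/H2/eqP/mul_eq1 => w; rewrite (NB_ext _ _ (pat_colW f)); exact: Hf.
move=> H; apply/forallP => p; apply/implyP => /eqP /mul_eq1 Hp.
by rewrite H.
Qed.
Definition NBS (V : finType) (e : rel V) (S : {set V}) (f : V -> 'F_2) (v : V) : 'F_2 :=
  \sum_(w in S) (if (v == w) || e v w then f w else 0).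
Definition kerS (V : finType) (e : rel V) (S : {set V}) f :=
  forall v, v \in S -> NBS e S f v = 0.
Definition onesS (V : finType) (e : rel V) (S : {set V}) f :=
  forall v, v \in S -> NBS e S f v = 1.
Definition solvS (V : finType) (e : rel V) (S : {set V}) :=
  forall f, kerS e S f -> forall v, v \in S -> f v = 0.
Definition halfS (V : finType) (e : rel V) (S : {set V}) v :=
  exists f, kerS e S f /\ f v = 1.
Definition allS (V : finType) (e : rel V) (S : {set V}) v :=
  forall f, onesS e S f -> f v = 1.
Definition extS (V : finType) (S : {set V}) (g : {x : V | x \in S} -> 'F_2) (v : V) : 'F_2 :=
  match insub v with Some x => g x | None => 0 end.

Lemma extS_val (V : finType) (S : {set V}) g (x : {x : V | x \in S}) : extS g (val x) = g x.
Proof. by rewrite /extS valK. Qed.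

Lemma NB_ind (V : finType) (e : rel V) (S : {set V}) f (x : {x : V | x \in S}) :
  NB (induced e S) (fun y => f (val y)) x = NBS e S f (val x).
Proof. by rewrite /NBS big_sub /NB. Qed.

Lemma NB_ind_ext (V : finType) (e : rel V) (S : {set V}) g (x : {x : V | x \in S}) :
  NB (induced e S) g x = NBS e S (extS g) (val x).
Proof. by rewrite -NB_ind; apply: NB_ext => y; rewrite extS_val. Qed.

Lemma solvSE (V : finType) (e : rel V) (S : {set V}) :
  ind_always_solvable e S <-> solvS e S.
Proof.
rewrite /ind_always_solvable solvE; split.
  move=> H f Hf v vS.
  have := H (fun y => f (val y)) _ (Sub v vS); apply => w.
  by rewrite NB_ind; apply: Hf; apply: valP.
move=> H g Hg w; rewrite -extS_val; apply: H (valP w) => v vS.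
by have := Hg (Sub v vS); rewrite NB_ind_ext.
Qed.

Lemma surjS (V : finType) (e : rel V) (S : {set V}) : ind_always_solvable e S ->
  forall c : V -> 'F_2, exists f, forall v, v \in S -> NBS e S f v = c v.
Proof.
move=> /surjE H c; have [g Hg] := H (fun y => c (val y)).
by exists (extS g) => v vS; have := Hg (Sub v vS); rewrite NB_ind_ext.
Qed.

Lemma halfSE (V : finType) (e : rel V) (S : {set V}) v (vS : v \in S) :
  half_activated (induced e S) (Sub v vS) <-> halfS e S v.
Proof.
split.
  case/halfE => g [Hg Hv]; exists (extS g); split.
    by move=> w wS; have := Hg (Sub w wS); rewrite NB_ind_ext.
  by rewrite -Hv -extS_val.
case=> f [Hf Hv]; apply/halfE; exists (fun y => f (val y)); split => //.
by move=> w; rewrite NB_ind; apply: Hf; apply: valP.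
Qed.

Lemma allSE (V : finType) (e : rel V) (S : {set V}) v (vS : v \in S) :
  [forall p : 'cV['F_2]_#|{: {x : V | x \in S}}|,
   (closed_adj (induced e S) *m p == const_mx 1) ==> (pat_at p (Sub v vS) == 1)]
  <-> allS e S v.
Proof.
split.
  move/allE => H f Hf; have := H (fun y => f (val y)); apply => w.
  by rewrite NB_ind; apply: Hf; apply: valP.
move=> H; apply/allE => g Hg; rewrite -extS_val; apply: H => w wS.
by have := Hg (Sub w wS); rewrite NB_ind_ext.
Qed.

Lemma act_m1 (V : finType) (e : rel V) (S : {set V}) v : v \in S ->
  halfS e S v -> ind_activation e S v = (-1)%R.
Proof.
move=> vS /(halfSE e vS) H; rewrite /ind_activation insubT actE.
by rewrite ifT //; apply/idP.
Qed.

Lemma act_1 (V : finType) (e : rel V) (S : {set V}) v : v \in S ->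
  ~ halfS e S v -> allS e S v -> ind_activation e S v = 1%R.
Proof.
move=> vS H1 /(allSE e vS) H2; rewrite /ind_activation insubT actE.
rewrite ifF; last by apply/negbTE/negP => /(halfSE e vS).
by rewrite ifT //; apply/idP.
Qed.

Lemma act_dec1 (V : finType) (e : rel V) (S : {set V}) v : v \in S ->
  ind_activation e S v = 1%R -> allS e S v.
Proof.
move=> vS; rewrite /ind_activation insubT actE.
case: ifP => // _; case: ifP => [H _|//]; exact/(allSE e vS).
Qed.

Lemma act_dec0 (V : finType) (e : rel V) (S : {set V}) v : v \in S ->
  ind_activation e S v = 0%R -> ~ allS e S v.
Proof.
move=> vS; rewrite /ind_activation insubT actE.
case: ifP => // _; case: ifP => // H _ /(allSE e vS); by rewrite H.
Qed.
Lemma SW (V : finType) (e : rel V) (hsym : symmetric e) (S : {set V}) a b :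
  \sum_(w in S) NBS e S a w * b w = \sum_(w in S) a w * NBS e S b w.
Proof.
rewrite /NBS.
transitivity (\sum_(w in S) \sum_(x in S) (if (w == x) || e w x then a x * b w else 0)).
  by apply: eq_bigr => w _; rewrite big_distrl /=; apply: eq_bigr => x _; case: ifP => _; rewrite ?mul0r.
rewrite exchange_big; apply: eq_bigr => w _; rewrite big_distrr /=; apply: eq_bigr => x _.
by rewrite (eq_sym x w) hsym; case: ifP => _; rewrite ?mulr0 // mulrC.
Qed.

Lemma PAIR (V : finType) (S : {set V}) (F : V -> V -> 'F_2) :
  (forall w x, F w x = F x w) -> (forall w, F w w = 0) ->
  \sum_(w in S) \sum_(x in S) F w x = 0.
Proof.
move=> Fs F0.
have E : forall w x, F w x = (if (enum_rank x < enum_rank w)%N then F w x else 0)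
   + (if (enum_rank w < enum_rank x)%N then F w x else 0).
  move=> w x; case: (ltngtP (enum_rank x) (enum_rank w)) => H; rewrite ?addr0 ?add0r //.
  have /enum_rank_inj -> : enum_rank x = enum_rank w by apply: val_inj.
  by rewrite F0 ?addr0.
rewrite (eq_bigr (fun w => \sum_(x in S) (if (enum_rank x < enum_rank w)%N then F w x else 0)
   + \sum_(x in S) (if (enum_rank w < enum_rank x)%N then F w x else 0))); last first.
  by move=> w _; rewrite -big_split /=; apply: eq_bigr => x _; exact: E.
rewrite big_split /= [X in _ + X]exchange_big /=.
rewrite [X in _ + X](eq_bigr (fun w => \sum_(x in S) (if (enum_rank x < enum_rank w)%N then F w x else 0))).
  exact: F2_dbl.
by move=> w _; apply: eq_bigr => x _; rewrite Fs.
Qed.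

Lemma QF (V : finType) (e : rel V) (hsym : symmetric e) (hirr : irreflexive e) (S : {set V}) q :
  \sum_(w in S) NBS e S q w * q w = \sum_(w in S) q w.
Proof.
rewrite /NBS.
transitivity (\sum_(w in S) \sum_(x in S) ((if w == x then q x * q w else 0) +
   (if e w x then q x * q w else 0))).
  apply: eq_bigr => w _; rewrite big_distrl; apply: eq_bigr => x _.
  case: (eqVneq w x) => [->|_] /=; first by rewrite hirr addr0.
  by case: ifP; rewrite ?mul0r ?addr0 ?add0r.
rewrite (eq_bigr (fun w => \sum_(x in S) (if w == x then q x * q w else 0) +
   \sum_(x in S) (if e w x then q x * q w else 0))); last by move=> w _; rewrite big_split.
rewrite big_split /= [X in _ + X]PAIR ?addr0; last 2 first.
- by move=> w x /=; rewrite hsym mulrC.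
- by move=> w /=; rewrite hirr.
apply: eq_bigr => w wS; rewrite (bigD1 w) //= eqxx big1 ?addr0 ?F2_sq //.
by move=> x /andP[_ H]; rewrite eq_sym (negbTE H).
Qed.

Lemma sum_delta (V : finType) (S : {set V}) v (g : V -> 'F_2) : v \in S ->
  \sum_(w in S) (if w == v then 1 else 0) * g w = g v.
Proof.
move=> vS; rewrite (bigD1 v) //= eqxx mul1r big1 ?addr0 //.
by move=> x /andP[_ H]; rewrite (negbTE H) mul0r.
Qed.

Lemma Qa (V : finType) (e : rel V) (hsym : symmetric e) (S : {set V}) v q j : v \in S ->
  (forall w, w \in S -> NBS e S q w = if w == v then 1 else 0) -> kerS e S j -> j v = 0.
Proof.
move=> vS Hq Hj; rewrite -(sum_delta j vS).
rewrite -(eq_bigr _ (fun w wS => congr1 (fun z => z * j w) (Hq w wS))) SW //.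
by rewrite big1 // => w wS; rewrite Hj // mulr0.
Qed.

Lemma Qb (V : finType) (e : rel V) (hsym : symmetric e) (hirr : irreflexive e) (S : {set V}) v q p :
  v \in S ->
  (forall w, w \in S -> NBS e S q w = if w == v then 1 else 0) -> onesS e S p -> p v = q v.
Proof.
move=> vS Hq Hp; rewrite -(sum_delta p vS) -(sum_delta q vS).
rewrite -(eq_bigr _ (fun w wS => congr1 (fun z => z * p w) (Hq w wS))) SW //.
rewrite -(eq_bigr _ (fun w wS => congr1 (fun z => z * q w) (Hq w wS))) QF //.
by apply: eq_bigr => w wS; rewrite Hp // mulr1.
Qed.
Lemma NBS_U (V : finType) (e : rel V) (A B : {set V}) f v : A :&: B = set0 ->
  NBS e (A :|: B) f v = NBS e A f v + NBS e B f v.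
Proof.
move=> H; rewrite /NBS (bigID (fun w => w \in A)) /=.
congr (_ + _); apply: eq_bigl => w; rewrite !inE; case wA: (w \in A);
  case wB: (w \in B) => //=.
have : w \in A :&: B by rewrite inE wA wB.
by rewrite H inE.
Qed.

Lemma NB_T (V : finType) (e : rel V) f v : NB e f v = NBS e setT f v.
Proof. by rewrite /NBS /NB; apply: eq_bigl => w; rewrite inE. Qed.

Lemma disj_neq (V : finType) (A B : {set V}) v w : A :&: B = set0 ->
  v \in A -> w \in B -> (v == w) = false.
Proof.
move=> H vA wB; apply/negbTE/eqP => E; subst w.
have : v \in A :&: B by rewrite inE vA wB.
by rewrite H inE.
Qed.

Lemma OE1 (V : finType) (e : rel V) (A B : {set V}) a b f v : A :&: B = set0 ->
  only_edge e A B a b -> b \in B -> v \in A -> NBS e B f v = if v == a then f b else 0.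
Proof.
move=> H Ho bB vA; rewrite /NBS.
rewrite (eq_bigr (fun w => if (v == a) && (w == b) then f w else 0)); last first.
  by move=> w wB; rewrite (disj_neq H vA wB) /= (Ho v w vA wB).
case: eqP => _ /=; last by rewrite big1.
by rewrite (bigD1 b) //= eqxx big1 ?addr0 // => w /andP[_ /negbTE ->].
Qed.

Lemma OE2 (V : finType) (e : rel V) (hsym : symmetric e) (A B : {set V}) a b f v :
  A :&: B = set0 ->
  only_edge e A B a b -> a \in A -> v \in B -> NBS e A f v = if v == b then f a else 0.
Proof.
move=> H Ho aA vB; rewrite /NBS.
rewrite (eq_bigr (fun w => if (v == b) && (w == a) then f w else 0)); last first.
  by move=> w wA; rewrite eq_sym (disj_neq H wA vB) /= hsym (Ho w v wA vB) andbC.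
case: eqP => _ /=; last by rewrite big1.
by rewrite (bigD1 a) //= eqxx big1 ?addr0 // => w /andP[_ /negbTE ->].
Qed.

Lemma NE1 (V : finType) (e : rel V) (A B : {set V}) f v : A :&: B = set0 ->
  no_edge e A B -> v \in A -> NBS e B f v = 0.
Proof.
move=> H Ho vA; rewrite /NBS big1 // => w wB.
by rewrite (disj_neq H vA wB) /= (Ho v w vA wB).
Qed.

Lemma NE2 (V : finType) (e : rel V) (hsym : symmetric e) (A B : {set V}) f v :
  A :&: B = set0 -> no_edge e A B -> v \in B -> NBS e A f v = 0.
Proof.
move=> H Ho vB; rewrite /NBS big1 // => w wA.
by rewrite eq_sym (disj_neq H wA vB) /= hsym (Ho w v wA vB).
Qed.

Lemma NBS_ext (V : finType) (e : rel V) (S : {set V}) f g v :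
  (forall w, w \in S -> f w = g w) -> NBS e S f v = NBS e S g v.
Proof. by move=> H; apply: eq_bigr => w wS; rewrite H. Qed.

Lemma NBS_add (V : finType) (e : rel V) (S : {set V}) f g v :
  NBS e S (fun w => f w + g w) v = NBS e S f v + NBS e S g v.
Proof.
rewrite /NBS -big_split /=; apply: eq_bigr => w _; by case: ifP; rewrite ?addr0.
Qed.
Definition rem_edge (V : finType) (g : rel V) (a b : V) : rel V :=
  fun y z => g y z && ~~ (((y == a) && (z == b)) || ((y == b) && (z == a))).

Lemma CONN_IND (V : finType) (g : rel V) (P : V -> Prop) a b :
  (forall v w, g v w -> P v -> P w) -> connect g a b -> P a -> P b.
Proof.
move=> H /connectP [p Hp ->]; elim: p a Hp => //= z p IH a /andP[Hz Hp] Pa.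
by apply: IH Hp _; apply: H Hz Pa.
Qed.

Lemma split_conn (V : finType) (g : rel V) a b x : connect g a x ->
  connect (rem_edge g a b) a x \/ connect (rem_edge g a b) b x.
Proof.
move=> H; apply: (@CONN_IND _ g (fun y => connect (rem_edge g a b) a y \/
  connect (rem_edge g a b) b y) a x _ H); last by left; apply: connect0.
move=> v w Hvw Pv.
case: (boolP (((v == a) && (w == b)) || ((v == b) && (w == a)))).
  by case/orP => /andP[_ /eqP ->]; [right|left]; apply: connect0.
move=> Hn; have Hg : rem_edge g a b v w by rewrite /rem_edge Hvw Hn.
by case: Pv => Hc; [left|right]; apply: connect_trans Hc (connect1 Hg).
Qed.

Lemma sym_rem (V : finType) (g : rel V) a b : symmetric g -> symmetric (rem_edge g a b).
Proof.
move=> hg y z; rewrite /rem_edge hg; congr (_ && ~~ _).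
by rewrite (andbC (z == a)) (andbC (z == b)) orbC.
Qed.

Lemma sub_rem (V : finType) (g : rel V) a b y z : rem_edge g a b y z -> g y z.
Proof. by case/andP. Qed.

Lemma no_nbr_conn (V : finType) (g : rel V) l x :
  (forall z, ~~ g l z) -> connect g l x -> x = l.
Proof.
move=> H /connectP [[|z p] /= Hp ->] //.
by move: Hp; rewrite (negbTE (H z)).
Qed.

Lemma noconn (V : finType) (e g : rel V) a b : acyclic_graph e ->
  (forall y z, g y z -> e y z) -> e b a -> a != b ->
  ~~ connect (rem_edge g a b) a b.
Proof.
move=> Hac Hge Hba Hab; apply/negP => /connectP [p Hp Hl].
case/shortenP: Hp Hl => p' Hp' Hu _ Hl.
case: p' Hp' Hu Hl => [|z [|z' p']].
- by move=> _ _ /= E; rewrite E eqxx in Hab.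
- move=> /= /andP[Hz _] _ E; subst z.
  by move: Hz; rewrite /rem_edge !eqxx /= andbF.
move=> Hp Hu Hl.
have := Hac [:: a, z, z' & p'] isT Hu => /negP; apply.
rewrite /cycle rcons_path; apply/andP; split.
  by apply: sub_path Hp => y w /sub_rem /Hge.
by rewrite -Hl.
Qed.

Lemma acyc_ind (V : finType) (e : rel V) (S : {set V}) :
  acyclic_graph e -> acyclic_graph (induced e S).
Proof.
move=> H c Hs Hu; have := H (map val c); rewrite size_map (map_inj_uniq val_inj).
by move/(_ Hs Hu); rewrite cycle_map.
Qed.

Lemma comp_tree (V : finType) (e g : rel V) r0 : symmetric g ->
  (forall y z, g y z -> e y z) -> acyclic_graph e ->
  ind_tree e [set x | connect g r0 x].
Proof.
move=> hg Hge Hac; split; last split; last exact: acyc_ind.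
  have h0 : r0 \in [set x | connect g r0 x] by rewrite inE connect0.
  by apply/card_gt0P; exists (Sub r0 h0).
move=> x y.
pose P := fun v => exists2 y0 : {x : V | x \in [set x | connect g r0 x]},
   val y0 = v & connect (induced e [set x | connect g r0 x]) x y0.
have : P (val y).
  apply: (@CONN_IND _ g P (val x)).
  - move=> v w Hvw [y0 Hy0 Hc].
    have hw : w \in [set x | connect g r0 x].
      by have := valP y0; rewrite !inE Hy0 => Hv; apply: connect_trans Hv (connect1 Hvw).
    exists (Sub w hw) => //; apply: connect_trans Hc (connect1 _).
    by rewrite /induced /= Hy0; apply: Hge.
  - have := valP x; have := valP y; rewrite !inE => Hy Hx.
    by apply: connect_trans _ Hy; rewrite (sym_connect_sym hg).
  - by exists x.
by case=> y0 /val_inj ->.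
Qed.
Lemma leaf_ex (V : finType) (e : rel V) : symmetric e -> irreflexive e -> acyclic_graph e ->
  (exists a b, e a b) -> exists l u, e l u /\ forall z, e l z -> z = u.
Proof.
move=> hsym hirr hac [a [b Hab]].
suff H : forall n x h p, path e x (h :: p) -> uniq (x :: h :: p) ->
    (#|V| - size p < n)%N -> exists l u, e l u /\ forall z, e l z -> z = u.
  apply: (H #|V|.+1 a b [::]); first by rewrite /= Hab.
    rewrite /= inE andbT; apply/eqP => E; subst b; by rewrite hirr in Hab.
  by rewrite /=; lia.
elim=> [//|n IH] x h p Hp Hu Hn.
case: (boolP [exists z, e x z && (z != h)]); last first.
  move/existsPn => Hn'; exists x, h; split; first by case/andP: Hp.
  move=> z Hz; have := Hn' z; rewrite Hz /= negbK => /eqP //.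
case/existsP => z /andP[Hxz Hzh].
case: (boolP (z \in x :: h :: p)).
  rewrite !inE => /orP[/eqP E| /orP[/eqP E | Hzp]].
  - by subst z; rewrite hirr in Hxz.
  - by rewrite E eqxx in Hzh.
  case/splitPr: Hzp Hp Hu => p1 p2 Hp Hu.
  have E : x :: h :: p1 ++ z :: p2 = (x :: rcons (h :: p1) z) ++ p2.
    by rewrite /= -cats1 -catA.
  rewrite E cat_uniq in Hu; case/andP: Hu => Hu _.
  have := hac (x :: rcons (h :: p1) z); rewrite /= size_rcons => /(_ isT Hu) /negP.
  case; rewrite /cycle rcons_path last_rcons [e z x]hsym Hxz andbT rcons_path.
  move: Hp => /= /andP[->]; rewrite cat_path => /andP[-> /=].
  by case/andP.
move=> Hz; apply: (IH z x (h :: p)).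
- by rewrite /= hsym Hxz.
- by rewrite /= Hz.
have : (size (x :: h :: p) <= #|V|)%N.
  by move/card_uniqP: Hu => <-; apply: max_card.
by move: Hn => /=; lia.
Qed.

Lemma tree_edge (V : finType) (e : rel V) : connected_graph e -> (2 <= #|V|)%N ->
  exists a b, e a b.
Proof.
move=> hc h2.
have [a [b Hab]] : exists a b : V, a != b.
  case/card_gt0P: (ltnW h2) => a _.
  have : (1 < #|V|)%N by [].
  rewrite (cardD1 a) ltnS => /card_gt0P [b]; rewrite !inE => /andP[Hb _].
  by exists a, b; rewrite eq_sym.
move: (hc a b) => /connectP [[|z p] /= Hp Hl]; first by rewrite Hl eqxx in Hab.
by exists a, z; case/andP: Hp.
Qed.
Lemma L_two (V : finType) (e : rel V) : symmetric e -> irreflexive e ->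
  split_two e -> always_solvable e.
Proof.
move=> hsym hirr.
case=> V1 [V2 [u [w [H12 HU uV1 wV2 [_ _ hs1 hs2 [ha1 _ Ho]]]]]].
apply/solvE => f Hf.
move/solvSE: hs1 => hs1; move/solvSE: hs2 => hs2.
have E : forall v, NB e f v = NBS e V1 f v + NBS e V2 f v.
  by move=> v; rewrite NB_T -HU NBS_U.
have K1 : forall v, v \in V1 -> NBS e V1 f v = if v == u then f w else 0.
  by move=> v vV1; have := Hf v; rewrite E (OE1 _ H12 Ho wV2 vV1) => /F2_add0.
have K2 : forall v, v \in V2 -> NBS e V2 f v = if v == w then f u else 0.
  by move=> v vV2; have := Hf v; rewrite E (OE2 hsym _ H12 Ho uV1 vV2) addrC => /F2_add0.
have Z : f w = 0 -> forall v, f v = 0.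
  move=> fw.
  have Z1 : forall v, v \in V1 -> f v = 0.
    by apply: hs1 => v vV1; rewrite K1 // fw; case: ifP.
  have Z2 : forall v, v \in V2 -> f v = 0.
    by apply: hs2 => v vV2; rewrite K2 // Z1 //; case: ifP.
  move=> v; have : v \in V1 :|: V2 by rewrite HU inE.
  by case/setUP => [/Z1|/Z2].
apply: Z; apply: F2_ne1 => fw1.
have Hd : forall v, v \in V1 -> NBS e V1 f v = if v == u then 1 else 0.
  by move=> v vV1; rewrite K1 // fw1.
have fu : f u = 1.
  apply: F2_ne0 => fu0.
  have : f w = 0 by apply: (hs2 f) wV2 => v vV2; rewrite K2 // fu0; case: ifP.
  by rewrite fw1; apply: F2_10.
apply: (act_dec0 uV1 ha1) => p Hp.
by rewrite (Qb hsym hirr uV1 Hd Hp) fu.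
Qed.
Lemma act1_q (V : finType) (e : rel V) (hsym : symmetric e) (hirr : irreflexive e)
  (S : {set V}) v q : ind_always_solvable e S -> v \in S -> ind_activation e S v = 1%R ->
  (forall w, w \in S -> NBS e S q w = if w == v then 1 else 0) -> q v = 1.
Proof.
move=> hs vS ha Hq.
have [p Hp] := surjS hs (fun _ => 1).
by rewrite -(Qb hsym hirr vS Hq Hp); apply: (act_dec1 vS ha).
Qed.

Lemma if0 (b : bool) : (if b then (0 : 'F_2) else 0) = 0.
Proof. by case: b. Qed.

Lemma L_p3 (V : finType) (e : rel V) : symmetric e -> irreflexive e ->
  split_path3 e -> always_solvable e.
Proof.
move=> hsym hirr.
case=> V1 [V2 [V3 [x [y [z [[H12 H13 H23 HU] [_ _ _ [hs1 hs2 hs3]]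
  [xV1 yV2 zV3] [ha1 _ ha3] [Ho12 Ho23 Hn13]]]]]]].
apply/solvE => f Hf.
have hs1' := hs1; have hs3' := hs3.
move/solvSE: hs1 => hs1; move/solvSE: hs2 => hs2; move/solvSE: hs3 => hs3.
have H123 : (V1 :|: V2) :&: V3 = set0 by rewrite setIUl H13 H23 setU0.
have E : forall v, NB e f v = NBS e V1 f v + NBS e V2 f v + NBS e V3 f v.
  by move=> v; rewrite NB_T -HU !NBS_U.
have K1 : forall v, v \in V1 -> NBS e V1 f v = if v == x then f y else 0.
  move=> v vV1; have := Hf v.
  by rewrite E (OE1 _ H12 Ho12 yV2 vV1) (NE1 _ H13 Hn13 vV1) addr0 => /F2_add0.
have K3 : forall v, v \in V3 -> NBS e V3 f v = if v == z then f y else 0.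
  move=> v vV3; have := Hf v.
  by rewrite E (OE2 hsym _ H23 Ho23 yV2 vV3) (NE2 hsym _ H13 Hn13 vV3) add0r addrC => /F2_add0.
have K2 : forall v, v \in V2 -> NBS e V2 f v = if v == y then f x + f z else 0.
  move=> v vV2; have := Hf v.
  rewrite E (OE2 hsym _ H12 Ho12 xV1 vV2) (OE1 _ H23 Ho23 zV3 vV2).
  rewrite addrC addrA => /F2_add0 <-.
  by case: ifP => _; rewrite ?addr0 // addrC.
have Z : f y = 0 -> forall v, f v = 0.
  move=> fy.
  have Z1 : forall v, v \in V1 -> f v = 0.
    by apply: hs1 => v vV1; rewrite K1 // fy if0.
  have Z3 : forall v, v \in V3 -> f v = 0.
    by apply: hs3 => v vV3; rewrite K3 // fy if0.
  have Z2 : forall v, v \in V2 -> f v = 0.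
    by apply: hs2 => v vV2; rewrite K2 // Z1 // Z3 // addr0 if0.
  move=> v; have : v \in V1 :|: V2 :|: V3 by rewrite HU inE.
  by case/setUP => [/setUP [/Z1|/Z2]|/Z3].
apply: Z; apply: F2_ne1 => fy1.
have fx : f x = 1.
  by apply: (act1_q hsym hirr hs1' xV1 ha1) => v vV1; rewrite K1 // fy1.
have fz : f z = 1.
  by apply: (act1_q hsym hirr hs3' zV3 ha3) => v vV3; rewrite K3 // fy1.
have : f y = 0.
  by apply: (hs2 f) yV2 => v vV2; rewrite K2 // fx fz F2_dbl if0.
by rewrite fy1; apply: F2_10.
Qed.
Lemma act_decm1 (V : finType) (e : rel V) (S : {set V}) v : v \in S ->
  ind_activation e S v = (-1)%R -> halfS e S v.
Proof.
move=> vS; rewrite /ind_activation insubT actE.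
case: ifP => [H _|_]; first exact/(halfSE e vS).
by case: ifP.
Qed.

Lemma L_X (V : finType) (e : rel V) : symmetric e -> irreflexive e ->
  split_X e -> always_solvable e.
Proof.
move=> hsym hirr.
case=> V1 [V2 [V3 [a [b [y [x [[H12 H13 H23 HU] [_ _ _ [hs1 hs2 hs3]]
  [aV1 bV2 yV3 xX] [_ _ ha3 hax] [Ho12 Ho3X]]]]]]]].
apply/solvE => f Hf.
have hs3' := hs3.
move/solvSE: hs1 => hs1; move/solvSE: hs2 => hs2; move/solvSE: hs3 => hs3.
set X := V1 :|: V2 in xX hax Ho3X.
have H3X : V3 :&: X = set0 by rewrite setIUr setIC H13 setIC H23 setU0.
have HU' : V3 :|: X = setT by rewrite setUC.
have [k [Hk kx]] := act_decm1 xX hax.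
have E : forall v, NB e f v = NBS e V3 f v + NBS e X f v.
  by move=> v; rewrite NB_T -HU' NBS_U.
have K3 : forall v, v \in V3 -> NBS e V3 f v = if v == y then f x else 0.
  by move=> v vV3; have := Hf v; rewrite E (OE1 _ H3X Ho3X xX vV3) => /F2_add0.
have KX : forall v, v \in X -> NBS e X f v = if v == x then f y else 0.
  by move=> v vX; have := Hf v; rewrite E (OE2 hsym _ H3X Ho3X yV3 vX) addrC => /F2_add0.
have KX0 : forall j, kerS e X j -> j b = 0 -> forall v, v \in X -> j v = 0.
  move=> j Hj jb.
  have J1 : forall v, v \in V1 -> j v = 0.
    apply: hs1 => v vV1; have vX : v \in X by rewrite inE vV1.
    by have := Hj v vX; rewrite NBS_U // (OE1 _ H12 Ho12 bV2 vV1) jb if0 addr0.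
  have J2 : forall v, v \in V2 -> j v = 0.
    apply: hs2 => v vV2; have vX : v \in X by rewrite inE vV2 orbT.
    by have := Hj v vX; rewrite NBS_U // (OE2 hsym _ H12 Ho12 aV1 vV2) J1 // if0 add0r.
  by move=> v; case/setUP => [/J1|/J2].
have KX1 : forall j, kerS e X j -> j x = 0 -> forall v, v \in X -> j v = 0.
  move=> j Hj jx.
  case: (F2_cases (j b)) => jb; first exact: KX0.
  case: (F2_cases (k b)) => kb.
    by have := KX0 k Hk kb x xX; rewrite kx => /F2_10.
  have Hg : kerS e X (fun w => j w + k w).
    by move=> v vX; rewrite NBS_add Hj // Hk // addr0.
  have gb : j b + k b = 0 by rewrite jb kb F2_dbl.
  by have := KX0 _ Hg gb x xX; rewrite jx kx add0r => /F2_10.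
have fy : f y = 0.
  apply: F2_ne1 => fy1.
  have := Qa hsym xX (q := f) _ Hk; rewrite kx => H; apply: F2_10; apply: H.
  by move=> v vX; rewrite KX // fy1.
have fx : f x = 0.
  apply: F2_ne1 => fx1.
  have H := act1_q hsym hirr hs3' yV3 ha3 (q := f).
  have : (0 : 'F_2) = 1 by rewrite -fy; apply: H => v vV3; rewrite K3 // fx1.
  by move/esym/F2_10.
have Z3 : forall v, v \in V3 -> f v = 0.
  by apply: hs3 => v vV3; rewrite K3 // fx if0.
have ZX : forall v, v \in X -> f v = 0.
  by apply: KX1 => // v vX; rewrite KX // fy if0.
move=> v; have : v \in V3 :|: X by rewrite HU' inE.
by case/setUP => [/Z3|/ZX].
Qed.
Lemma solv_sub (V : finType) (e : rel V)
  (hS : forall f, (forall v, NBS e setT f v = 0) -> forall v, f v = 0)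
  (C : {set V}) u0 : (forall v w, v \notin C -> w \in C -> e v w -> w = u0) ->
  forall j, kerS e C j -> j u0 = 0 -> forall v, v \in C -> j v = 0.
Proof.
move=> HB j Hj ju v vC.
pose J := fun w => if w \in C then j w else 0.
have : J v = 0.
  apply: hS => x; rewrite -(setUCr C) NBS_U ?setICr //.
  have -> : NBS e (~: C) J x = 0.
    rewrite /NBS big1 // => w; rewrite inE => wC; rewrite /J (negbTE wC).
    by case: ifP.
  rewrite addr0 (@NBS_ext _ e _ _ j x); last by move=> w wC; rewrite /J wC.
  case xC: (x \in C); first exact: Hj.
  rewrite /NBS big1 // => w wC.
  have -> : (x == w) = false by apply/negbTE/eqP => E; subst w; rewrite wC in xC.
  case: ifP => //= Hxw; by rewrite (HB x w (negbT xC) wC Hxw).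
by rewrite /J vC.
Qed.

Lemma act_0 (V : finType) (e : rel V) (S : {set V}) v : v \in S ->
  ~ halfS e S v -> ~ allS e S v -> ind_activation e S v = 0%R.
Proof.
move=> vS H1 H2; rewrite /ind_activation insubT actE.
rewrite ifF; last by apply/negbTE/negP => /(halfSE e vS).
by rewrite ifF //; apply/negbTE/negP => /(allSE e vS).
Qed.

Lemma NBS1 (V : finType) (e : rel V) l f v :
  NBS e [set l] f v = if (v == l) || e v l then f l else 0.
Proof. by rewrite /NBS big_set1. Qed.

Lemma L_A (V : finType) (e : rel V) (hsym : symmetric e) (hirr : irreflexive e)
  (hS : forall f, (forall v, NBS e setT f v = 0) -> forall v, f v = 0) (l u : V) :
  e l u -> (forall z, e l z -> z = u) -> ind_tree e [set~ l] -> ind_tree e [set l] ->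
  solvS e [set~ l] -> split_two e.
Proof.
move=> Hlu Hleaf tT tL sT.
have ul : u != l by apply/eqP => E; subst; rewrite hirr in Hlu.
have HI : [set~ l] :&: [set l] = set0 by rewrite setIC setICr.
have HU : [set~ l] :|: [set l] = setT by rewrite setUC setUCr.
have uT : u \in [set~ l] by rewrite in_setC1.
have lL : l \in [set l] by rewrite set11.
have OTL : only_edge e [set~ l] [set l] u l.
  move=> x y _ /set1P ->; rewrite eqxx andbT; apply/idP/eqP => [|->].
    by rewrite hsym => /Hleaf.
  by rewrite hsym.
have sL : solvS e [set l].
  move=> f Hf v /set1P ->; have := Hf l lL; by rewrite NBS1 eqxx.
exists [set~ l], [set l], u, l; split => //.
split; [exact: tT | exact: tL | exact/solvSE | exact/solvSE |].
split; [|  | exact: OTL]; last first.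

  apply: (@act_1 V e [set l] l lL).
  + by case=> f [Hf fl]; have := sL f Hf l lL; rewrite fl; apply: F2_10.
  + by move=> p Hp; have := Hp l lL; rewrite NBS1 eqxx.
apply: (@act_0 V e [set~ l] u uT).
  by case=> f [Hf fu]; have := sT f Hf u uT; rewrite fu; apply: F2_10.
move=> Hall.
have sT' : ind_always_solvable e [set~ l] by apply/solvSE.
have [p Hp] := surjS sT' (fun _ => 1).
have [q Hq] := surjS sT' (fun w => if w == u then 1 else 0).
have qu : q u = 1 by rewrite -(Qb hsym hirr uT Hq Hp); apply: Hall.
pose K := fun v => if v == l then 1 else q v.
have : K l = 0.
  apply: hS => v; rewrite -HU NBS_U //.
  case: (eqVneq v l) => [->|vl].
    rewrite (OE2 hsym _ HI OTL uT lL) eqxx NBS1 eqxx /= /K eqxx (negbTE ul) qu.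
    exact: F2_dbl.
  have vT : v \in [set~ l] by rewrite in_setC1.
  rewrite (OE1 _ HI OTL lL vT) (@NBS_ext _ e _ _ q v); last first.
    by move=> w; rewrite in_setC1 /K => /negbTE ->.
  rewrite Hq // /K eqxx; case: ifP => _; [exact: F2_dbl | exact: addr0].
by rewrite /K eqxx; apply: F2_10.
Qed.
Lemma L_B (V : finType) (e : rel V) (hsym : symmetric e) (hirr : irreflexive e)
  (hS : forall f, (forall v, NBS e setT f v = 0) -> forall v, f v = 0)
  (C2 C3 : {set V}) (l u c : V) :
  C2 :&: C3 = set0 -> l \notin C2 -> l \notin C3 ->
  (forall x, x != l -> (x \in C2) || (x \in C3)) -> u \in C2 -> c \in C3 ->
  e l u -> (forall z, e l z -> z = u) -> e u c ->
  (forall v w, v \notin C2 -> w \in C2 -> e v w -> w = u) ->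
  (forall v w, v \notin C3 -> w \in C3 -> e v w -> w = c) ->
  ind_tree e [set l] -> ind_tree e C2 -> ind_tree e C3 ->
  forall k, kerS e (C2 :|: C3) k -> k u = 1 -> k c = 1 ->
  split_path3 e /\ split_X e.
Proof.
move=> d23 nL2 nL3 cov uC2 cC3 Hlu Hleaf Huc B2 B3 tL t2 t3 k Hk ku kc.
have lL : l \in [set l] by rewrite set11.
have hL2 : [set l] :&: C2 = set0.
  apply/setP => x; rewrite !inE; case: (eqVneq x l) => [->|] //=; exact: negbTE.
have hL3 : [set l] :&: C3 = set0.
  apply/setP => x; rewrite !inE; case: (eqVneq x l) => [->|] //=; exact: negbTE.
have hU : [set l] :|: C2 :|: C3 = setT.
  apply/setP => x; rewrite !inE; case: (eqVneq x l) => //= xl; exact: cov.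
have n23 : forall x, x \in C2 -> x \notin C3.
  move=> x x2; apply/negP => x3.
  have : x \in C2 :&: C3 by rewrite inE x2 x3.
  by rewrite d23 inE.
have O23 : only_edge e C2 C3 u c.
  move=> x y x2 y3; apply/idP/andP => [Hxy|[/eqP -> /eqP ->] //].
  have yc := B3 x y (n23 x x2) y3 Hxy; subst y.
  have y2 : c \notin C2 by apply/negP => /n23; rewrite cC3.
  by rewrite (B2 c x y2 x2); last by rewrite hsym.
have OL2 : only_edge e [set l] C2 l u.
  move=> x y /set1P -> _; rewrite eqxx /=; apply/idP/eqP => [/Hleaf //|->]; exact: Hlu.
have NL3 : no_edge e [set l] C3.
  move=> x y /set1P -> y3; apply/negbTE/negP => /Hleaf E; subst y.
  by move: (n23 u uC2); rewrite y3.
have OLX : only_edge e [set l] (C2 :|: C3) l u.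
  move=> x y /set1P -> _; rewrite eqxx /=; apply/idP/eqP => [/Hleaf //|->]; exact: Hlu.
have E23 : forall v, v \in C2 :|: C3 -> NBS e C2 k v + NBS e C3 k v = 0.
  by move=> v vX; rewrite -NBS_U // Hk.
have KC2 : forall v, v \in C2 -> NBS e C2 k v = if v == u then 1 else 0.
  move=> v v2; have := E23 v; rewrite inE v2 => /(_ isT).
  by rewrite (OE1 _ d23 O23 cC3 v2) kc => /F2_add0.
have KC3 : forall v, v \in C3 -> NBS e C3 k v = if v == c then 1 else 0.
  move=> v v3; have := E23 v; rewrite inE v3 orbT => /(_ isT).
  by rewrite (OE2 hsym _ d23 O23 uC2 v3) ku addrC => /F2_add0.
have s2 : solvS e C2.
  move=> j Hj; apply: (solv_sub hS B2 Hj); exact: (Qa hsym uC2 KC2 Hj).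
have s3 : solvS e C3.
  move=> j Hj; apply: (solv_sub hS B3 Hj); exact: (Qa hsym cC3 KC3 Hj).
have sL : solvS e [set l].
  move=> f Hf v /set1P ->; have := Hf l lL; by rewrite NBS1 eqxx.
have aL : ind_activation e [set l] l = 1%R.
  apply: (@act_1 V e [set l] l lL).
  + by case=> f [Hf fl]; have := sL f Hf l lL; rewrite fl; apply: F2_10.
  + by move=> p Hp; have := Hp l lL; rewrite NBS1 eqxx.
have a2 : ind_activation e C2 u = 1%R.
  apply: (@act_1 V e C2 u uC2).
  + by case=> f [Hf fl]; have := s2 f Hf u uC2; rewrite fl; apply: F2_10.
  + by move=> p Hp; rewrite (Qb hsym hirr uC2 KC2 Hp) ku.
have a3 : ind_activation e C3 c = 1%R.
  apply: (@act_1 V e C3 c cC3).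
  + by case=> f [Hf fl]; have := s3 f Hf c cC3; rewrite fl; apply: F2_10.
  + by move=> p Hp; rewrite (Qb hsym hirr cC3 KC3 Hp) kc.
have uX : u \in C2 :|: C3 by rewrite inE uC2.
have aX : ind_activation e (C2 :|: C3) u = (-1)%R.
  by apply: (@act_m1 V e _ u uX); exists k.
have sL' : ind_always_solvable e [set l] by apply/solvSE.
have s2' : ind_always_solvable e C2 by apply/solvSE.
have s3' : ind_always_solvable e C3 by apply/solvSE.
have hL2' : C2 :&: [set l] = set0 by rewrite setIC.
have hL3' : C3 :&: [set l] = set0 by rewrite setIC.
have hU' : C2 :|: C3 :|: [set l] = setT by rewrite setUC setUA.
split.
  exists [set l], C2, C3, l, u, c.
  by split; [split | split => //; split | split | split | split].
exists C2, C3, [set l], u, c, l, u.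
by split; [split | split => //; split | split | split | split].
Qed.
Lemma L_fwd (V : finType) (e : rel V) : simple_graph e -> is_tree e -> (2 <= #|V|)%N ->
  always_solvable e -> split_two e \/ (split_path3 e /\ split_X e).
Proof.
move=> [hsym hirr] [_ [hconn hac]] h2 /solvE hS0.
have hS : forall f, (forall v, NBS e setT f v = 0) -> forall v, f v = 0.
  by move=> f Hf; apply: hS0 => v; rewrite NB_T.
have [l [u [Hlu Hleaf]]] := leaf_ex hsym hirr hac (tree_edge hconn h2).
have ul : u != l by apply/eqP => E; subst; rewrite hirr in Hlu.
pose g1 := rem_edge e u l.
have g1_l : forall z, ~~ g1 l z.
  move=> z; apply/negP => /andP[/Hleaf ->]; by rewrite !eqxx orbT.
have hg1 : symmetric g1 by apply: sym_rem.
have g1e : forall y z, g1 y z -> e y z by move=> y z /sub_rem.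
have HT : [set~ l] = [set x | connect g1 u x].
  apply/setP => x; rewrite !inE; apply/idP/idP.
    move=> xl; case: (split_conn l (hconn u x)) => // /(no_nbr_conn g1_l) E.
    by rewrite E eqxx in xl.
  move=> H; apply/eqP => E; subst x.
  by move: H; rewrite (sym_connect_sym hg1) => /(no_nbr_conn g1_l) E; rewrite E eqxx in ul.
have HL : [set l] = [set x | connect g1 l x].
  apply/setP => x; rewrite !inE; apply/eqP/idP => [->|/(no_nbr_conn g1_l) //].
  exact: connect0.
have tT : ind_tree e [set~ l] by rewrite HT; apply: comp_tree.
have tL : ind_tree e [set l] by rewrite HL; apply: comp_tree.
case: (classic (solvS e [set~ l])) => hT.
  by left; apply: (L_A hsym hirr hS Hlu Hleaf tT tL hT).
right.
have [k [Hk [v0 [v0T kv0]]]] : exists k, kerS e [set~ l] k /\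
    exists v0, v0 \in [set~ l] /\ k v0 <> 0.
  apply: NNPP => H; apply: hT => k Hk v0 v0T; apply: NNPP => kv0; apply: H.
  by exists k; split => //; exists v0.
have uT : u \in [set~ l] by rewrite in_setC1.
have BT : forall v w, v \notin [set~ l] -> w \in [set~ l] -> e v w -> w = u.
  by move=> v w; rewrite in_setC1 negbK => /eqP -> _ /Hleaf.
have ku : k u = 1.
  apply: F2_ne0 => ku0; apply: kv0; exact: (solv_sub hS BT Hk ku0).
have [c [cT [Huc kc]]] : exists c, c \in [set~ l] /\ e u c /\ k c = 1.
  apply: NNPP => H.
  have := Hk u uT; rewrite /NBS (bigD1 u) //= eqxx /= big1 ?addr0 ?ku; first exact: F2_10.
  move=> w /andP[wT wu]; rewrite eq_sym (negbTE wu) /=; case: ifP => // Huw.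
  by apply: F2_ne1 => kw; apply: H; exists w.
have cl : c != l by rewrite -in_setC1.
have uc : u != c by apply/eqP => E; subst; rewrite hirr in Huc.
pose g2 := rem_edge g1 u c.
have hg2 : symmetric g2 by apply: sym_rem.
have g2e : forall y z, g2 y z -> e y z by move=> y z /sub_rem /sub_rem.
have g2_l : forall z, ~~ g2 l z by move=> z; apply/negP => /sub_rem; apply/negP.
have nc : ~~ connect g2 u c.
  by apply: (noconn (e := e) hac g1e); rewrite // hsym.
have [C2 [in2 t2]] : exists C2 : {set V}, (forall x, (x \in C2) = connect g2 u x) /\ ind_tree e C2.
  by exists [set x | connect g2 u x]; split; [move=> x; rewrite inE | apply: comp_tree].
have [C3 [in3 t3]] : exists C3 : {set V}, (forall x, (x \in C3) = connect g2 c x) /\ ind_tree e C3.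
  by exists [set x | connect g2 c x]; split; [move=> x; rewrite inE | apply: comp_tree].
have cs2 := sym_connect_sym hg2.
have d23 : C2 :&: C3 = set0.
  apply/setP => x; rewrite !inE in2 in3; apply/negbTE/negP => /andP[H2 H3].
  by move: nc; rewrite (connect_trans H2) // cs2.
have nL2 : l \notin C2.
  by rewrite in2 cs2; apply/negP => /(no_nbr_conn g2_l) E; rewrite E eqxx in ul.
have nL3 : l \notin C3.
  by rewrite in3 cs2; apply/negP => /(no_nbr_conn g2_l) E; rewrite E eqxx in cl.
have uC2 : u \in C2 by rewrite in2 connect0.
have cC3 : c \in C3 by rewrite in3 connect0.
have cov : forall x, x != l -> (x \in C2) || (x \in C3).
  move=> x; rewrite -in_setC1 HT inE => /(split_conn c) [H|H].
    by rewrite in2 H.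
  by rewrite in3 H orbT.
have cn2 : c \notin C2 by rewrite in2.
have un3 : u \notin C3 by rewrite in3 cs2.
have B2 : forall v w, v \notin C2 -> w \in C2 -> e v w -> w = u.
  move=> v w v2 w2 Hvw.
  case: (boolP (g2 w v)) => [Hg|Hng].
    by move: v2; rewrite !in2 (connect_trans _ (connect1 Hg)) // -in2.
  move: Hng; rewrite /g2 /g1 /rem_edge hsym Hvw /= negb_and !negbK.
  case: (eqVneq w u) => //= wu.
  case/orP => /andP[/eqP E _]; subst w.
  - by rewrite w2 in nL2.
  - by rewrite w2 in cn2.
have B3 : forall v w, v \notin C3 -> w \in C3 -> e v w -> w = c.
  move=> v w v3 w3 Hvw.
  case: (boolP (g2 w v)) => [Hg|Hng].
    by move: v3; rewrite !in3 (connect_trans _ (connect1 Hg)) // -in3.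
  move: Hng; rewrite /g2 /g1 /rem_edge hsym Hvw /= negb_and !negbK.
  case: (eqVneq w c) => //= wc.
  rewrite orbF; case/orP => [/orP [] | ] => /andP[/eqP E _]; subst w.
  - by rewrite w3 in un3.
  - by rewrite w3 in nL3.
  - by rewrite w3 in un3.
have HX : C2 :|: C3 = [set~ l].
  apply/setP => x; rewrite inE in_setC1; case: (eqVneq x l) => [->|xl].
    by rewrite (negbTE nL2) (negbTE nL3).
  exact: cov.
apply: (L_B hsym hirr hS d23 nL2 nL3 cov uC2 cC3 Hlu Hleaf Huc B2 B3 tL t2 t3 (k := k)) => //.
by rewrite HX.
Qed.

Theorem theorem4p7 (V : finType) (e : rel V) :
  simple_graph e -> is_tree e -> (2 <= #|V|)%N ->
  (always_solvable e <-> (split_two e \/ split_path3 e)) /\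
  (always_solvable e <-> (split_two e \/ split_X e)).
Proof.
move=> hs ht h2; have [hsym hirr] := hs.
have back2 : split_two e -> always_solvable e by apply: L_two.
split; split.
- by case/(L_fwd hs ht h2) => [|[]]; [left | right].
- by case => [|]; [apply: L_two | apply: L_p3].
- by case/(L_fwd hs ht h2) => [|[]]; [left | right].
- by case => [|]; [apply: L_two | apply: L_X].
Qed.
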